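(* Suppose a bijective real-linear map $T\colon M_2(\mathbb F)\to M_2(\mathbb F)$ satisfies $\|T(A)T(B)\|=\|T(A)\|\,\|T(B)\|$ whenever $\|AB\|=\|A\|\,\|B\|$. Then $T(\mathbb F I)=\mathbb F I$.
   Context: $\mathbb F$ is $\mathbb C$ or $\mathbb R$ and $\|\cdot\|$ is the spectral norm on $M_2(\mathbb F)$. *)

(* Defs.v *)
From HB Require Import structures.
From mathcomp Require Import all_boot all_order all_algebra.
From mathcomp Require Import all_classical all_reals.
From mathcomp Require Import complex.
Set Implicit Arguments. Unset Strict Implicit. Unset Printing Implicit Defensive.
Import Order.TTheory GRing.Theory Num.Theory.
Local Open Scope ring_scope.
Local Open Scope classical_set_scope.

(* Euclidean norm of a column vector in F^2, given the modulus abs : F -> R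
   (abs = absolute value for F = R, abs = complex modulus for F = C). *)
Definition vnorm (R : realType) (F : nzRingType) (abs : F -> R)
  (x : 'cV[F]_2) : R :=
  Num.sqrt (\sum_(i < 2) abs (x i ord0) ^+ 2).

Definition specnorm (R : realType) (F : nzRingType) (abs : F -> R)
  (A : 'M[F]_2) : R :=
  sup [set vnorm abs (A *m x) | x in [set x : 'cV[F]_2 | vnorm abs x = 1]].

Definition real_linear (R : realType) (F : nzRingType) (emb : R -> F)
  (T : 'M[F]_2 -> 'M[F]_2) : Prop :=
  (forall A B, T (A + B) = T A + T B) /\
  (forall (r : R) A, T (emb r *: A) = emb r *: T A).

Definition scalar_mxs (F : nzRingType) : set 'M[F]_2 :=
  [set a%:M | a in [set: F]].

Definition thm11_for (R : realType) (F : nzRingType) (abs : F -> R)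
  (emb : R -> F) : Prop :=
  forall T : 'M[F]_2 -> 'M[F]_2,
    bijective T -> real_linear emb T ->
    (forall A B : 'M[F]_2,
       specnorm abs (A *m B) = specnorm abs A * specnorm abs B ->
       specnorm abs (T A *m T B) = specnorm abs (T A) * specnorm abs (T B)) ->
    T @` @scalar_mxs F = @scalar_mxs F.

(* Main.v *)
Require Import Defs.
From HB Require Import structures.
From mathcomp Require Import all_boot all_order all_algebra.
From mathcomp Require Import all_classical all_reals.
From mathcomp Require Import complex.
Import Order.TTheory GRing.Theory Num.Theory.
From mathcomp Require Import ring lra.
Local Open Scope ring_scope.
Section Gen.
Variables (R : realType) (F : fieldType).
Variables (abs : F -> R) (emb : R -> F) (conj : F -> F) (re : F -> R).
Hypothesis embD : forall a b, emb (a + b) = emb a + emb b.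
Hypothesis embM : forall a b, emb (a * b) = emb a * emb b.
Hypothesis emb1 : emb 1 = 1.
Hypothesis emb_inj : injective emb.
Hypothesis conjD : forall x y, conj (x + y) = conj x + conj y.
Hypothesis conjM : forall x y, conj (x * y) = conj x * conj y.
Hypothesis conjK : involutive conj.
Hypothesis conj_emb : forall r, conj (emb r) = emb r.
Hypothesis abs_ge0 : forall x, 0 <= abs x.
Hypothesis abs_def : forall x, emb (abs x ^+ 2) = x * conj x.
Hypothesis re_def : forall z, emb (re z *+ 2) = z + conj z.
Hypothesis re_le : forall z, re z <= abs z.
Variable iota : F.
Hypothesis sep : forall b, b + conj b = 0 ->
  iota * conj b + conj iota * b = 0 -> b = 0.

Lemma emb0 : emb 0 = 0.
Proof. by apply: (@addrI _ (emb 0)); rewrite -embD !addr0. Qed.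
Lemma embN a : emb (- a) = - emb a.
Proof. by apply: (@addrI _ (emb a)); rewrite -embD !subrr emb0. Qed.
Lemma embB a b : emb (a - b) = emb a - emb b.
Proof. by rewrite embD embN. Qed.
Lemma embX a n : emb (a ^+ n) = emb a ^+ n.
Proof. elim: n => [|n IH]; first by rewrite !expr0 emb1. by rewrite !exprS embM IH. Qed.
Lemma embMn a n : emb (a *+ n) = emb a *+ n.
Proof. elim: n => [|n IH]; first by rewrite !mulr0n emb0. by rewrite !mulrS embD IH. Qed.
Lemma embV a : emb (a^-1) = (emb a)^-1.
Proof.
have [->|a0] := eqVneq a 0; first by rewrite invr0 emb0 invr0.
have e0 : emb a != 0 by apply/eqP => h; move/eqP: a0; apply; apply: emb_inj; rewrite h emb0.
by apply: (mulfI e0); rewrite -embM !divff // emb1.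
Qed.
Lemma conj0 : conj 0 = 0. Proof. by rewrite -emb0 conj_emb. Qed.
Lemma conj1 : conj 1 = 1. Proof. by rewrite -emb1 conj_emb. Qed.
Lemma conjN x : conj (- x) = - conj x.
Proof. by apply: (@addrI _ (conj x)); rewrite -conjD !subrr conj0. Qed.
Lemma conjB x y : conj (x - y) = conj x - conj y.
Proof. by rewrite conjD conjN. Qed.
Lemma conj_inj : injective conj. Proof. exact: (can_inj conjK). Qed.
Lemma conjMn x n : conj (x *+ n) = conj x *+ n.
Proof. elim: n => [|n IH]; first by rewrite !mulr0n conj0. by rewrite !mulrS conjD IH. Qed.
Lemma conjV x : conj (x^-1) = (conj x)^-1.
Proof.
have [->|a0] := eqVneq x 0; first by rewrite invr0 conj0 invr0.
have e0 : conj x != 0 by apply/eqP => h; move/eqP: a0; apply; apply: conj_inj; rewrite h conj0.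
by apply: (mulfI e0); rewrite -conjM !divff // conj1.
Qed.

Lemma abs_eq0 x : abs x = 0 -> x = 0.
Proof.
move=> h; have := abs_def x; rewrite h expr0n /= emb0 => /esym/eqP.
rewrite mulf_eq0 => /orP[/eqP //|/eqP h2]; apply: conj_inj; by rewrite h2 conj0.
Qed.
Lemma abs0 : abs 0 = 0.
Proof.
have := abs_def 0; rewrite mul0r -emb0 => /emb_inj/eqP.
by rewrite sqrf_eq0 => /eqP.
Qed.
Lemma abs_sq_inj (a b : R) : 0 <= a -> 0 <= b -> a ^+ 2 = b ^+ 2 -> a = b.
Proof. by move=> ha hb /eqP; rewrite eqrXn2 // => /eqP. Qed.
Lemma absM x y : abs (x * y) = abs x * abs y.
Proof.
apply: abs_sq_inj; rewrite ?mulr_ge0 //; apply: emb_inj.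
by rewrite abs_def exprMn embM !abs_def conjM mulrACA.
Qed.
Lemma abs_emb r : abs (emb r) = `|r|.
Proof.
apply: abs_sq_inj => //; apply: emb_inj.
by rewrite abs_def conj_emb real_normK ?num_real // embX expr2.
Qed.
Lemma abs_conj x : abs (conj x) = abs x.
Proof. apply: abs_sq_inj => //; apply: emb_inj; by rewrite !abs_def conjK mulrC. Qed.
Lemma absN x : abs (- x) = abs x.
Proof. by rewrite -mulN1r absM -emb1 -embN abs_emb normrN normr1 mul1r. Qed.
Lemma re_emb r : re (emb r) = r.
Proof.
have h : re (emb r) *+ 2 = r *+ 2.
  by apply: emb_inj; rewrite re_def conj_emb embMn mulr2n.
lra.
Qed.

Lemma two_neq0 : (2 : F) != 0.
Proof.
apply/eqP => h; have : emb 2 = emb 0 by rewrite emb0 -h -[2%R]/(1 *+ 2) embMn emb1.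
by move/emb_inj/eqP; rewrite pnatr_eq0.
Qed.
Lemma reE z : emb (re z) = (z + conj z) / 2.
Proof. by apply: (mulIf two_neq0); rewrite divfK ?two_neq0 // mulr_natr -embMn re_def. Qed.
Lemma re_conj z : re (conj z) = re z.
Proof. by apply: emb_inj; rewrite !reE conjK addrC. Qed.
Lemma reD z w : re (z + w) = re z + re w.
Proof. by apply: emb_inj; rewrite embD !reE conjD -mulrDl addrACA. Qed.
Lemma reN z : re (- z) = - re z.
Proof. by apply: emb_inj; rewrite embN !reE conjN -mulNr opprD. Qed.
Lemma reMemb r z : re (emb r * z) = r * re z.
Proof. by apply: emb_inj; rewrite embM !reE conjM conj_emb -mulrDr mulrA. Qed.
Lemma re_ge z : - abs z <= re z.
Proof. by rewrite lerNl -reN -absN re_le. Qed.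
Lemma re_normsq x : re (x * conj x) = abs x ^+ 2.
Proof. by rewrite -abs_def re_emb. Qed.

Definition i0 : 'I_2 := ord0.
Definition i1 : 'I_2 := ord_max.
Lemma ord2P (i : 'I_2) : i = i0 \/ i = i1.
Proof. case: i => [[|[|m]] Hm]; [left|right|by []]; exact: val_inj. Qed.
Lemma ord1P (j : 'I_1) : j = ord0.
Proof. case: j => [[|m] Hm] //; exact: val_inj. Qed.
Lemma sum2 (f : 'I_2 -> F) : \sum_(i < 2) f i = f i0 + f i1.
Proof. rewrite big_ord_recr big_ord_recr big_ord0 /= ?add0r; congr (f _ + f _); exact: val_inj. Qed.
Lemma sum2R (f : 'I_2 -> R) : \sum_(i < 2) f i = f i0 + f i1.
Proof. rewrite big_ord_recr big_ord_recr big_ord0 /= ?add0r; congr (f _ + f _); exact: val_inj. Qed.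

Notation cV := 'cV[F]_2.
Notation M2 := 'M[F]_2.
Definition nsq (x : cV) : R := abs (x i0 ord0) ^+ 2 + abs (x i1 ord0) ^+ 2.
Definition ip (x y : cV) : F := conj (x i0 ord0) * y i0 ord0 + conj (x i1 ord0) * y i1 ord0.
Definition ct (M : M2) : M2 := \matrix_(i, j) conj (M j i).

Lemma vnormE x : vnorm abs x = Num.sqrt (nsq x).
Proof. by rewrite /vnorm sum2R. Qed.
Lemma nsq_ge0 x : 0 <= nsq x.
Proof. by rewrite addr_ge0 // sqr_ge0. Qed.
Lemma nsqE x : emb (nsq x) = ip x x.
Proof. by rewrite embD !abs_def !(mulrC (x _ _)). Qed.
Lemma cv_eq (x y : cV) : x i0 ord0 = y i0 ord0 -> x i1 ord0 = y i1 ord0 -> x = y.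
Proof. by move=> h0 h1; apply/matrixP => i j; rewrite (ord1P j); case: (ord2P i) => ->. Qed.
Lemma m_eq (A B : M2) : A i0 i0 = B i0 i0 -> A i0 i1 = B i0 i1 -> A i1 i0 = B i1 i0 -> A i1 i1 = B i1 i1 -> A = B.
Proof. by move=> h00 h01 h10 h11; apply/matrixP => i j; case: (ord2P i) => ->; case: (ord2P j) => ->. Qed.
Lemma nsq_eq0 x : nsq x = 0 -> x = 0.
Proof.
move=> h; have h0 : abs (x i0 ord0) ^+ 2 = 0.
  by apply/le_anti; rewrite sqr_ge0 andbT -h lerDl sqr_ge0.
have h1 : abs (x i1 ord0) ^+ 2 = 0 by move: h; rewrite /nsq h0 add0r.
move/eqP: h0; rewrite sqrf_eq0 => /eqP/abs_eq0 h0.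
move/eqP: h1; rewrite sqrf_eq0 => /eqP/abs_eq0 h1.
by apply: cv_eq; rewrite ?h0 ?h1 mxE.
Qed.
Lemma mulmxE (M : M2) (x : cV) i : (M *m x) i ord0 = M i i0 * x i0 ord0 + M i i1 * x i1 ord0.
Proof. by rewrite mxE sum2. Qed.
Lemma mulmxE2 (A B : M2) i j : (A *m B) i j = A i i0 * B i0 j + A i i1 * B i1 j.
Proof. by rewrite mxE sum2. Qed.
Lemma ctE (M : M2) i j : ct M i j = conj (M j i).
Proof. by rewrite mxE. Qed.
Lemma ctK M : ct (ct M) = M.
Proof. by apply/matrixP => i j; rewrite !mxE conjK. Qed.
Lemma ip_adj (M : M2) x y : ip (M *m x) y = ip x (ct M *m y).
Proof.
rewrite /ip !mulmxE !ctE !conjD !conjM.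
set a := M i0 i0; set b := M i0 i1; set c := M i1 i0; set d := M i1 i1.
rewrite ?conjK; ring.
Qed.
Lemma conj_ip x y : conj (ip x y) = ip y x.
Proof. rewrite /ip conjD !conjM !conjK; ring. Qed.
Lemma nsqD x y : nsq (x + y) = nsq x + nsq y + re (ip x y) *+ 2.
Proof.
apply: emb_inj; rewrite nsqE embD re_def embD !nsqE conj_ip /ip !mxE !conjD; ring.
Qed.
Lemma nsqZ a x : nsq (a *: x) = abs a ^+ 2 * nsq x.
Proof. by rewrite /nsq !mxE !absM !exprMn mulrDr. Qed.
Lemma nsqN x : nsq (- x) = nsq x.
Proof. by rewrite /nsq !mxE !absN. Qed.
Lemma ipZl a x y : ip (a *: x) y = conj a * ip x y.
Proof. rewrite /ip !mxE !conjM; ring. Qed.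
Lemma ipZr a x y : ip x (a *: y) = a * ip x y.
Proof. rewrite /ip !mxE; ring. Qed.
Lemma ipDr x y z : ip x (y + z) = ip x y + ip x z.
Proof. rewrite /ip !mxE; ring. Qed.
Lemma ipDl x y z : ip (x + y) z = ip x z + ip y z.
Proof. rewrite /ip !mxE !conjD; ring. Qed.
Lemma ipNl x y : ip (- x) y = - ip x y.
Proof. rewrite /ip !mxE !conjN; ring. Qed.
Lemma ipNr x y : ip x (- y) = - ip x y.
Proof. rewrite /ip !mxE; ring. Qed.
Lemma re_ip_self x : re (ip x x) = nsq x.
Proof. by rewrite -nsqE re_emb. Qed.
Lemma ctD A B : ct (A + B) = ct A + ct B.
Proof. by apply/matrixP => i j; rewrite !mxE conjD. Qed.
Lemma ctM A B : ct (A *m B) = ct B *m ct A.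
Proof. apply/matrixP => i j; rewrite !mulmxE2 !ctE mulmxE2 conjD !conjM; ring. Qed.
Lemma le_sqrt_sq {a b : R} : 0 <= a -> 0 <= b -> Num.sqrt a <= b -> a <= b ^+ 2.
Proof. move=> ha hb h; have h1 := sqrtr_ge0 a; have h2 := sqr_sqrtr ha; nra. Qed.
Lemma sqrt_le (a b : R) : 0 <= b -> a <= b ^+ 2 -> Num.sqrt a <= b.
Proof. by move=> hb h; rewrite -(ger0_norm hb) -sqrtr_sqr ler_wsqrtr. Qed.

Lemma nsq_le2 x y : nsq (x + y) <= (nsq x + nsq y) *+ 2.
Proof.
have := nsq_ge0 (x - y); rewrite nsqD nsqN ipNr reN mulNrn => h.
rewrite nsqD; lra.
Qed.

Definition e0 : cV := delta_mx i0 ord0.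
Lemma nsq_e0 : nsq e0 = 1.
Proof. by rewrite /nsq !mxE /= -emb1 abs_emb normr1 abs0 expr0n /= addr0 expr1n. Qed.

Definition nrm (M : M2) := specnorm abs M.
Definition Eset (M : M2) := [set vnorm abs (M *m x) | x in [set x : cV | vnorm abs x = 1]]%classic.
Lemma nrmE M : nrm M = sup (Eset M). Proof. by []. Qed.

Lemma unitP x : vnorm abs x = 1 -> nsq x = 1.
Proof. rewrite vnormE => h; by rewrite -(sqr_sqrtr (nsq_ge0 x)) h expr1n. Qed.

Lemma colE (M : M2) (x : cV) : M *m x = x i0 ord0 *: col i0 M + x i1 ord0 *: col i1 M.
Proof. by apply: cv_eq; rewrite mulmxE !mxE mulrC [x i1 _ * _]mulrC. Qed.

Lemma nsq_comp (x : cV) : abs (x i0 ord0) ^+ 2 <= nsq x /\ abs (x i1 ord0) ^+ 2 <= nsq x.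
Proof. by rewrite /nsq; split; [rewrite lerDl | rewrite lerDr]; rewrite sqr_ge0. Qed.

Lemma Eset_ub M : has_ubound (Eset M).
Proof.
exists (Num.sqrt ((nsq (col i0 M) + nsq (col i1 M)) *+ 2)).
move=> y [x /= /unitP hx <-]; rewrite vnormE ler_wsqrtr //.
rewrite colE; apply: (le_trans (nsq_le2 _ _)); rewrite !nsqZ lerMn2r /=.
have [h0 h1] := nsq_comp x; rewrite hx in h0 h1.
have := nsq_ge0 (col i0 M); have := nsq_ge0 (col i1 M).
have := abs_ge0 (x i0 ord0); have := abs_ge0 (x i1 ord0). nra.
Qed.
Lemma Eset_n0 M : (Eset M !=set0)%classic.
Proof.
exists (vnorm abs (M *m e0)); exists e0 => //=.
by rewrite vnormE nsq_e0 sqrtr1.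
Qed.
Lemma Eset_sup M : has_sup (Eset M).
Proof. split; [exact: Eset_n0 | exact: Eset_ub]. Qed.

Lemma nrm_ub M x : vnorm abs x = 1 -> vnorm abs (M *m x) <= nrm M.
Proof. by move=> hx; apply: sup_upper_bound; [exact: Eset_sup | exists x]. Qed.
Lemma nrm_ge0 M : 0 <= nrm M.
Proof.
have he : vnorm abs e0 = 1 by rewrite vnormE nsq_e0 sqrtr1.
exact: le_trans (sqrtr_ge0 _) (nrm_ub M e0 he).
Qed.

Lemma nsq_le M x : nsq (M *m x) <= nrm M ^+ 2 * nsq x.
Proof.
have [->|xn0] := eqVneq x 0.
  by rewrite mulmx0 /nsq !mxE abs0 expr0n /= !addr0 mulr0.
have hx : 0 < nsq x.
  rewrite lt_neqAle nsq_ge0 andbT; apply/eqP => h; move/eqP: xn0; apply; exact: nsq_eq0.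
set s := Num.sqrt (nsq x).
have sp : 0 < s by rewrite sqrtr_gt0.
have s2 : s ^+ 2 = nsq x by rewrite sqr_sqrtr ?nsq_ge0.
set y := emb (s^-1) *: x.
have hs : 0 <= s^-1 by rewrite invr_ge0 ltW.
have hy : vnorm abs y = 1.
  rewrite vnormE nsqZ abs_emb (ger0_norm hs) exprVn s2 mulVf ?sqrtr1 //.
  by rewrite gt_eqF.
have := nrm_ub M y hy; rewrite vnormE /y -scalemxAr nsqZ abs_emb (ger0_norm hs) => h.
have h2 := le_sqrt_sq (mulr_ge0 (sqr_ge0 _) (nsq_ge0 _)) (nrm_ge0 M) h.
rewrite exprVn s2 in h2.
have nx : nsq x != 0 by rewrite gt_eqF.
rewrite -(mulVKf nx (nsq (M *m x))) [_ * nsq x]mulrC ler_wpM2l ?nsq_ge0 //.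
Qed.

Lemma nrm_le M c : 0 <= c -> (forall x, nsq (M *m x) <= c ^+ 2 * nsq x) -> nrm M <= c.
Proof.
move=> hc h; rewrite nrmE; apply: ge_sup; first exact: Eset_n0.
move=> y [x /= /unitP hx <-]; rewrite vnormE; apply: sqrt_le => //.
by have := h x; rewrite hx mulr1.
Qed.

Lemma nrm_mul A B : nrm (A *m B) <= nrm A * nrm B.
Proof.
apply: nrm_le; first by rewrite mulr_ge0 ?nrm_ge0.
move=> x; rewrite -mulmxA.
have h1 := nsq_le A (B *m x); have h2 := nsq_le B x.
have h3 := sqr_ge0 (nrm A).
rewrite exprMn -mulrA; apply: (le_trans h1); rewrite ler_wpM2l //.
Qed.
Lemma nsq_ct_normal X y : ct X *m X = X *m ct X -> nsq (ct X *m y) = nsq (X *m y).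
Proof.
move=> hn; apply: emb_inj; rewrite !nsqE ip_adj ctK mulmxA -hn -mulmxA.
by rewrite -ip_adj.
Qed.

Lemma normal_P X : ct X *m X = X *m ct X -> nrm (X *m X) = nrm X ^+ 2.
Proof.
move=> hn; apply/le_anti; rewrite {1}expr2 nrm_mul /=.
set N := nrm (X *m X).
have N0 : 0 <= N by apply: nrm_ge0.
suff : nrm X <= Num.sqrt N.
  move=> h; have h1 := nrm_ge0 X; have h2 := sqrtr_ge0 N; have := sqr_sqrtr N0; nra.
apply: nrm_le; first exact: sqrtr_ge0.
move=> x; rewrite sqr_sqrtr //.
set m := nsq (X *m x).
set w := ct X *m (X *m x).
have hm : re (ip x w) = m by rewrite /w -ip_adj re_ip_self.
have hw : nsq w <= N ^+ 2 * nsq x by rewrite /w nsq_ct_normal // mulmxA nsq_le.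
have [N00|Np] := eqVneq N 0.
  have : nsq w = 0 by apply/le_anti; rewrite nsq_ge0 andbT; move: hw; rewrite N00 expr0n /= mul0r.
  move/nsq_eq0 => w0; move: hm; rewrite w0 /ip !mxE !mulr0 addr0 -emb0 re_emb => <-.
  by rewrite N00 mul0r.
have Np' : 0 < N by rewrite lt_neqAle eq_sym Np N0.
have := nsq_ge0 (emb N *: x - w).
rewrite nsqD nsqZ nsqN ipZl conj_emb ipNr mulrN reN reMemb hm abs_emb (ger0_norm N0) => h.
have h2 : N * m <= N * (N * nsq x) by nra.
by rewrite ler_pM2l in h2.
Qed.

Lemma quad0 (q C : R) : 0 <= C -> (forall t, (t * q) *+ 2 <= t ^+ 2 * C) -> q = 0.
Proof.
move=> hC h; set d := C + 1; have dp : 0 < d by rewrite /d; lra.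
have := h (q / d); set t := q / d => ht.
have qd : q = t * d by rewrite /t mulfVK // gt_eqF.
have dE : d = C + 1 by [].
rewrite qd in ht *; have := sqr_ge0 t; rewrite dE in ht *.
have : t ^+ 2 * (C + 2) <= 0 by lra.
have hC2 : 0 < C + 2 by lra.
move=> ht2; have t0 : t ^+ 2 = 0 by nra.
by move/eqP: t0; rewrite sqrf_eq0 => /eqP ->; rewrite mul0r.
Qed.

Lemma kernel M v : nsq (M *m v) = nrm M ^+ 2 * nsq v ->
  ct M *m (M *m v) = emb (nrm M ^+ 2) *: v.
Proof.
move=> hv; set s2 := nrm M ^+ 2.
have [u hu] : exists u, u = ct M *m (M *m v) - emb s2 *: v by eexists.
suff : nsq u = 0 by move/nsq_eq0; rewrite hu => /eqP; rewrite subr_eq0 => /eqP.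
have hC : nsq (M *m u) <= s2 * nsq u := nsq_le M u.
apply: (@quad0 _ (s2 * nsq u - nsq (M *m u))); first by lra.
move=> t; have := nsq_le M (v + emb t *: u).
rewrite mulmxDr -scalemxAr !nsqD !nsqZ !ipZr !reMemb abs_emb real_normK ?num_real // hv.
have -> : re (ip (M *m v) (M *m u)) = re (ip u u) + s2 * re (ip v u).
  rewrite -reMemb -reD; congr re.
  have e : ip (M *m v) (M *m u) = ip (ct M *m (M *m v)) u by rewrite [RHS]ip_adj ctK.
  rewrite e [X in _ = ip X _ + _]hu ipDl ipNl ipZl conj_emb.
  by rewrite subrK.
rewrite re_ip_self -/s2 => h.
nra.
Qed.
Definition vec2 (a b : F) : cV := \matrix_(i < 2, j < 1) (if i == i0 then a else b).
Lemma vec2_0 a b : vec2 a b i0 ord0 = a. Proof. by rewrite mxE. Qed.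
Lemma vec2_1 a b : vec2 a b i1 ord0 = b. Proof. by rewrite mxE. Qed.
Lemma vec2E (x : cV) : x = vec2 (x i0 ord0) (x i1 ord0).
Proof. by apply: cv_eq; rewrite ?vec2_0 ?vec2_1. Qed.
Lemma vec2_eq0 a b : vec2 a b = 0 -> a = 0 /\ b = 0.
Proof. by move=> h; split; [rewrite -(vec2_0 a b) h mxE | rewrite -(vec2_1 a b) h mxE]. Qed.
Lemma nsq_vec2 a b : nsq (vec2 a b) = abs a ^+ 2 + abs b ^+ 2.
Proof. by rewrite /nsq vec2_0 vec2_1. Qed.

Lemma abs_sq_emb t : abs (emb t) ^+ 2 = t ^+ 2.
Proof. by rewrite abs_emb real_normK ?num_real. Qed.
Lemma abs1 : abs 1 = 1.
Proof. by rewrite -emb1 abs_emb normr1. Qed.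

Section Attain.
Variable N : M2.
Let s2 := nrm N ^+ 2.
Let u := col i0 N.
Let w := col i1 N.
Let h := ip u w.
Let k := abs h.
Let p := s2 - nsq u.
Let r := s2 - nsq w.
Let Q v := s2 * nsq v - nsq (N *m v).

Lemma Q_ge0 v : 0 <= Q v.
Proof. by rewrite /Q subr_ge0 nsq_le. Qed.

Lemma QE a b : Q (vec2 a b) = p * abs a ^+ 2 + r * abs b ^+ 2 - re (conj a * b * h) *+ 2.
Proof.
rewrite /Q colE vec2_0 vec2_1 nsqD !nsqZ ipZl ipZr nsq_vec2 /p /r -/u -/w -/h mulrA.
lra.
Qed.

Lemma p_ge0 : 0 <= p.
Proof. have := Q_ge0 (vec2 1 0); rewrite QE abs1 abs0 mulr0 mul0r -emb0 re_emb expr1n expr0n /=; lra. Qed.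
Lemma r_ge0 : 0 <= r.
Proof. have := Q_ge0 (vec2 0 1); rewrite QE abs1 abs0 conj0 !mul0r -emb0 re_emb expr1n expr0n /=; lra. Qed.

Lemma Qt t : Q (vec2 h (emb t)) = p * k ^+ 2 + r * t ^+ 2 - (t * k ^+ 2) *+ 2.
Proof.
rewrite QE abs_sq_emb; congr (_ - _ *+ 2).
by rewrite mulrC mulrA -abs_def -embM re_emb mulrC.
Qed.

Lemma g_ge0 : 0 <= p * r - k ^+ 2.
Proof.
have hp := p_ge0; have hr := r_ge0; have hk : 0 <= k := abs_ge0 _.
case: (ltrP 0 r) => hr0.
  have := Q_ge0 (vec2 h (emb (k ^+ 2 / r))); rewrite Qt => hq.
  set t := k ^+ 2 / r in hq.
  have tr : t * r = k ^+ 2 by rewrite /t mulfVK // gt_eqF.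
  have hk2 : 0 <= k ^+ 2 by apply: sqr_ge0.
  have : 0 <= k ^+ 2 * (p * r - k ^+ 2) by nra.
  have : r = 0 \/ 0 < r by right.
  move=> _ hh; have hk2' : k ^+ 2 = 0 \/ 0 < k ^+ 2 by rewrite le0r in hk2; case/orP: hk2 => [/eqP|]; [left|right].
  case: hk2' => [k0|kp]; first by rewrite k0; nra.
  by rewrite pmulr_rge0 in hh.
have r0 : r = 0 by apply/le_anti; rewrite hr hr0.
have := Q_ge0 (vec2 h (emb (p + 1))); rewrite Qt r0 => hq.
have hk2 : 0 <= k ^+ 2 by apply: sqr_ge0.
have e : p * r = 0 by rewrite r0 mulr0.
rewrite mul0r in hq; nra.
Qed.
Lemma Q_lb v : (p * r - k ^+ 2) * nsq v <= (p + r) * Q v.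
Proof.
rewrite [v]vec2E nsq_vec2 QE.
set a := v i0 ord0; set b := v i1 ord0.
have hre : re (conj a * b * h) <= abs a * abs b * k by rewrite (le_trans (re_le _)) // !absM abs_conj.
have ha := abs_ge0 a; have hb := abs_ge0 b; have hk : 0 <= k := abs_ge0 _.
have hp := p_ge0; have hr := r_ge0.
have sos : 0 <= (p * abs a - k * abs b) ^+ 2 + (r * abs b - k * abs a) ^+ 2 by rewrite addr_ge0 ?sqr_ge0.
have hpr : 0 <= p + r by lra.
have h2 : (p + r) * (abs a * abs b * k) *+ 2 >= (p + r) * re (conj a * b * h) *+ 2.
  by rewrite lerMn2r /= ler_wpM2l.
nra.
Qed.

Lemma attain : exists x, x != 0 /\ nsq (N *m x) = s2 * nsq x.
Proof.
have hg := g_ge0; have hp := p_ge0; have hr := r_ge0.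
have hk2 : 0 <= k ^+ 2 by apply: sqr_ge0.
case: (ltrP 0 (p * r - k ^+ 2)) => hg0.
  exfalso.
  have pr0 : 0 < p + r.
    have : 0 < p * r by lra.
    move=> hpr; case: (ltrP 0 p) => hp0; first by lra.
    have p0 : p = 0 by apply/le_anti; rewrite hp0 hp.
    by move: hpr; rewrite p0 mul0r ltxx.
  set d := (p * r - k ^+ 2) / (p + r).
  have dp : 0 < d by rewrite /d divr_gt0.
  have hv : forall v, nsq (N *m v) <= (s2 - d) * nsq v.
    move=> v; have := Q_lb v; rewrite /Q => hq.
    have hq' : d * nsq v <= s2 * nsq v - nsq (N *m v).
      rewrite /d mulrAC ler_pdivrMr //.
      by rewrite [_ * (p + r)]mulrC.
    lra.
  have e0v := hv (vec2 1 0).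
  rewrite nsq_vec2 abs1 abs0 expr1n expr0n /= addr0 mulr1 in e0v.
  have hsd : 0 <= s2 - d by apply: le_trans e0v; apply: nsq_ge0.
  have hn : nrm N <= Num.sqrt (s2 - d).
    by apply: nrm_le; [apply: sqrtr_ge0 | move=> v; rewrite sqr_sqrtr //].
  have es : s2 = nrm N ^+ 2 by [].
  have := sqr_sqrtr hsd; have := nrm_ge0 N; have := sqrtr_ge0 (s2 - d); nra.
have g0 : p * r - k ^+ 2 = 0 by apply/le_anti; rewrite hg0 hg.
have [hh|hh] := boolP ((h == 0) && (p == 0)).
  case/andP: hh => /eqP h0 /eqP p0.
  exists (vec2 1 0); split.
    by apply/eqP => /vec2_eq0 [/eqP]; rewrite oner_eq0.
  have := QE 1 0; rewrite /Q abs1 abs0 p0 h0 mulr0 -emb0 re_emb expr0n /=.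
  move=> hq; lra.
exists (vec2 h (emb p)); split.
  apply/eqP => /vec2_eq0 [h0 ep]; move: hh; rewrite h0 eqxx /=.
  by rewrite -emb0 in ep; move/emb_inj: ep => ->; rewrite eqxx.
have := Qt p; rewrite /Q => hq.
have : p * k ^+ 2 + r * p ^+ 2 - (p * k ^+ 2) *+ 2 = p * (p * r - k ^+ 2) by ring.
rewrite g0 mulr0 => e; lra.
Qed.
End Attain.
Lemma mx_kill2 {K : M2} {x y : cV} : K *m x = 0 -> K *m y = 0 ->
  x i0 ord0 * y i1 ord0 - x i1 ord0 * y i0 ord0 != 0 -> K = 0.
Proof.
move=> hx hy hd.
have ex i : K i i0 * x i0 ord0 + K i i1 * x i1 ord0 = 0 by rewrite -mulmxE hx mxE.
have ey i : K i i0 * y i0 ord0 + K i i1 * y i1 ord0 = 0 by rewrite -mulmxE hy mxE.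
have e0 i : K i i0 = 0.
  apply/eqP; rewrite -(mulIr_eq0 _ (rregP hd)); apply/eqP.
  have := ex i; have := ey i; move=> h1 h2.
  have -> : K i i0 * (x i0 ord0 * y i1 ord0 - x i1 ord0 * y i0 ord0) =
    y i1 ord0 * (K i i0 * x i0 ord0 + K i i1 * x i1 ord0) - x i1 ord0 * (K i i0 * y i0 ord0 + K i i1 * y i1 ord0) by ring.
  by rewrite h1 h2 !mulr0 subr0.
have e1 i : K i i1 = 0.
  apply/eqP; rewrite -(mulIr_eq0 _ (rregP hd)); apply/eqP.
  have := ex i; have := ey i; move=> h1 h2.
  have -> : K i i1 * (x i0 ord0 * y i1 ord0 - x i1 ord0 * y i0 ord0) =
    x i0 ord0 * (K i i0 * y i0 ord0 + K i i1 * y i1 ord0) - y i0 ord0 * (K i i0 * x i0 ord0 + K i i1 * x i1 ord0) by ring.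
  by rewrite h1 h2 !mulr0 subr0.
by apply: m_eq; rewrite ?e0 ?e1 mxE.
Qed.

Lemma mx_eq0 (X : M2) : (forall x : cV, X *m x = 0) -> X = 0.
Proof.
move=> h; apply: (@mx_kill2 X (vec2 1 0) (vec2 0 1) (h _) (h _)).
by rewrite !vec2_0 !vec2_1 mulr1 mulr0 subr0 oner_eq0.
Qed.

Definition perp (x : cV) : cV := vec2 (- conj (x i1 ord0)) (conj (x i0 ord0)).

Lemma ip_perp x : ip x (perp x) = 0.
Proof. rewrite /ip /perp vec2_0 vec2_1; ring. Qed.

Lemma nsq_perp x : nsq (perp x) = nsq x.
Proof. by rewrite /perp nsq_vec2 absN !abs_conj /nsq addrC. Qed.

Lemma orth (x v : cV) : x != 0 -> ip x v = 0 -> exists nu, v = nu *: perp x.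
Proof.
move=> xn0 hv; rewrite /ip in hv.
have [x0|x0] := eqVneq (x i0 ord0) 0.
  have x1 : x i1 ord0 != 0.
    apply/eqP => x1; move/eqP: xn0; apply; apply: cv_eq; by rewrite ?x0 ?x1 mxE.
  have cx1 : conj (x i1 ord0) != 0 by apply/eqP => h; move/eqP: x1; apply; apply: conj_inj; rewrite h conj0.
  exists (- v i0 ord0 / conj (x i1 ord0)); apply: cv_eq; rewrite mxE /perp ?vec2_0 ?vec2_1.
    by rewrite -mulrA mulrN mulVf // mulrN1 opprK.
  move: hv; rewrite x0 conj0 mul0r add0r => /eqP; rewrite mulf_eq0 (negbTE cx1) /= => /eqP ->.
  by rewrite mulr0.
have cx0 : conj (x i0 ord0) != 0 by apply/eqP => h; move/eqP: x0; apply; apply: conj_inj; rewrite h conj0.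
exists (v i1 ord0 / conj (x i0 ord0)); apply: cv_eq; rewrite mxE /perp ?vec2_0 ?vec2_1; last by rewrite divfK.
apply: (mulfI cx0); rewrite mulrN.
have -> : conj (x i0 ord0) * v i0 ord0 = - (conj (x i1 ord0) * v i1 ord0).
  by apply/eqP; rewrite -addr_eq0 hv.
by rewrite mulrN mulrA [conj (x i0 ord0) * _]mulrC mulfVK // mulrC.
Qed.
Lemma nsq_pos {x} : x != 0 -> 0 < nsq x.
Proof. move=> xn0; rewrite lt_neqAle nsq_ge0 andbT; apply/eqP => h; move/eqP: xn0; apply; exact: nsq_eq0. Qed.

Lemma P_normal X : nrm (X *m X) = nrm X ^+ 2 -> ct X *m X = X *m ct X.
Proof.
move=> hP; set s := nrm X.
have s0 : 0 <= s := nrm_ge0 X.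
have [sz|sn0] := eqVneq s 0.
  have X0 : X = 0.
    apply: mx_eq0 => x; apply: nsq_eq0; apply/le_anti; rewrite nsq_ge0 andbT.
    by have := nsq_le X x; rewrite -/s sz expr0n /= mul0r.
  by rewrite X0 mul0mx mulmx0.
have sp : 0 < s by rewrite lt_neqAle eq_sym sn0 s0.
have s2p : 0 < s ^+ 2 by rewrite exprn_gt0.
have [x [xn0 hx]] := attain (X *m X).
rewrite hP -mulmxA -/s in hx.
set y := X *m x in hx.
have h1 : nsq (X *m y) <= s ^+ 2 * nsq y := nsq_le X y.
have h2 : nsq y <= s ^+ 2 * nsq x := nsq_le X x.
have nx : 0 < nsq x := nsq_pos xn0.
have hy : nsq y = s ^+ 2 * nsq x.
  apply/le_anti; rewrite h2 /=.
  have : s ^+ 2 * (s ^+ 2 * nsq x) <= s ^+ 2 * nsq y by rewrite mulrA -expr2 -hx.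
  by rewrite ler_pM2l.
have hXy : nsq (X *m y) = s ^+ 2 * nsq y by rewrite hx hy mulrA.
have kx := kernel X x hy.
have ky := kernel X y hXy.
rewrite -/s in kx ky.
have yn0 : y != 0.
  apply/eqP => y0; move: hy; rewrite y0 /nsq !mxE abs0 expr0n /= addr0 => /esym/eqP.
  by rewrite mulf_eq0 !gt_eqF.
set K := ct X *m X - emb (s ^+ 2) *: 1%:M.
have Kv (v : cV) : ct X *m (X *m v) = emb (s ^+ 2) *: v -> K *m v = 0.
  by move=> hv; rewrite /K mulmxBl -mulmxA hv -scalemxAl mul1mx subrr.
have [hd|hd] := boolP (x i0 ord0 * y i1 ord0 - x i1 ord0 * y i0 ord0 != 0).
  have K0 : K = 0 by apply: (mx_kill2 (Kv _ kx) (Kv _ ky) hd).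
  have e1 : ct X *m X = emb (s ^+ 2) *: 1%:M by apply/eqP; rewrite -subr_eq0 -/K K0.
  have es : emb (s ^+ 2) != 0 by apply/eqP => h; move: s2p; rewrite -emb0 in h; move/emb_inj: h => ->; rewrite ltxx.
  have e2 : ((emb (s ^+ 2))^-1 *: ct X) *m X = 1%:M by rewrite -scalemxAl e1 scalerA mulVf // scale1r.
  have e3 := mulmx1C e2.
  have e4 : X *m ct X = emb (s ^+ 2) *: 1%:M.
    by rewrite -[ct X](scalerKV es) -scalemxAr e3.
  by rewrite e1 e4.
move: hd; rewrite negbK => /eqP hd.
have [lam hlam] : exists lam, y = lam *: x.
  have [x0|x0] := eqVneq (x i0 ord0) 0.
    have x1 : x i1 ord0 != 0.
      by apply/eqP => x1; move/eqP: xn0; apply; apply: cv_eq; rewrite ?x0 ?x1 mxE.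
    exists (y i1 ord0 / x i1 ord0); apply: cv_eq; rewrite [(_ *: x) _ _]mxE; last by rewrite divfK.
    move: hd; rewrite x0 mul0r sub0r => /eqP; rewrite oppr_eq0 mulf_eq0 (negbTE x1) /= => /eqP ->.
    by rewrite mulr0.
  exists (y i0 ord0 / x i0 ord0); apply: cv_eq; rewrite [(_ *: x) _ _]mxE; first by rewrite divfK.
  apply: (mulfI x0); rewrite mulrA [x i0 ord0 * (_ / _)]mulrC divfK //.
  by apply/eqP; rewrite -subr_eq0 [y i0 ord0 * _]mulrC hd.
have lam2 : abs lam ^+ 2 = s ^+ 2.
  have nxn : nsq x != 0 by rewrite gt_eqF.
  apply: (mulIf nxn); by rewrite -nsqZ -hlam hy.
have lamc : lam * conj lam = emb (s ^+ 2) by rewrite -abs_def lam2.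
have lam0 : lam != 0.
  apply/eqP => l0; move: lam2; rewrite l0 abs0 expr0n /= => /eqP; by rewrite eq_sym gt_eqF.
have cx : ct X *m x = conj lam *: x.
  apply: (scalerI lam0); rewrite scalerA lamc -kx -/y hlam scalemxAr //.
set z := perp x.
have xz : ip x z = 0 := ip_perp x.
have [nu hnu] : exists nu, X *m z = nu *: z.
  apply: orth => //; rewrite -[X in ip _ (X *m z)]ctK -ip_adj cx ipZl xz mulr0 //.
have [nu' hnu'] : exists nu, ct X *m z = nu *: z.
  apply: orth => //; rewrite -ip_adj -/y hlam ipZl xz mulr0 //.
apply/eqP; rewrite eq_sym -subr_eq0; apply/eqP.
apply: (mx_kill2 (x := x) (y := z)).
- rewrite mulmxBl -!mulmxA cx kx -scalemxAr -/y hlam scalerA mulrC lamc subrr //.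
- rewrite mulmxBl -!mulmxA hnu hnu' -!scalemxAr hnu hnu' !scalerA mulrC subrr //.
- rewrite /z /perp vec2_0 vec2_1 mulrN opprK.
  apply/eqP => h; have : emb (nsq x) = 0 by rewrite nsqE /ip -h; ring.
  by rewrite -emb0 => /emb_inj; apply/eqP; rewrite gt_eqF.
Qed.
Definition nml (X : M2) := ct X *m X = X *m ct X.
Definition rel (X Z : M2) := X *m ct Z + Z *m ct X = ct X *m Z + ct Z *m X.

Lemma rel_of X Z : nml X -> nml Z -> nml (X + Z) -> rel X Z.
Proof.
move=> hX hZ; rewrite /rel /nml ctD mulmxDl !mulmxDr !mulmxDl hX hZ -!addrA => h1.
have h2 := addrI _ h1; move: h2; rewrite !addrA => h2.
have h3 := addIr _ h2; by rewrite h3 addrC.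
Qed.
Definition EA (X : M2) := X i0 i1 = conj (X i1 i0) /\
  X i0 i0 - conj (X i0 i0) = X i1 i1 - conj (X i1 i1).
Definition EB (X : M2) := X i0 i1 = - conj (X i1 i0) /\
  X i0 i0 + conj (X i0 i0) = X i1 i1 + conj (X i1 i1).

Lemma m_eqE (A B : M2) : A = B <->
  [/\ A i0 i0 = B i0 i0, A i0 i1 = B i0 i1, A i1 i0 = B i1 i0 & A i1 i1 = B i1 i1].
Proof. by split => [->//|[]]; apply: m_eq. Qed.

Lemma EA_nml {X} : EA X -> nml X.
Proof.
case=> h01 hd; apply/m_eqE; rewrite !mulmxE2 !ctE h01 !conjK.
have hd' : conj (X i0 i0) = X i0 i0 - (X i0 i0 - conj (X i0 i0)) by ring.
rewrite hd in hd'.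
rewrite hd'; split; ring.
Qed.

Lemma EB_nml {X} : EB X -> nml X.
Proof.
case=> h01 hd; apply/m_eqE; rewrite !mulmxE2 !ctE h01 !conjN !conjK.
have hd' : conj (X i0 i0) = (X i0 i0 + conj (X i0 i0)) - X i0 i0 by ring.
rewrite hd in hd'.
rewrite hd'; split; ring.
Qed.

Lemma EA_add {X Y} : EA X -> EA Y -> EA (X + Y).
Proof.
case=> h1 h2 [h3 h4]; rewrite /EA !mxE !conjD h1 h3; split => //.
have -> : X i0 i0 + Y i0 i0 - (conj (X i0 i0) + conj (Y i0 i0)) =
  (X i0 i0 - conj (X i0 i0)) + (Y i0 i0 - conj (Y i0 i0)) by ring.
rewrite h2 h4; ring.
Qed.
Lemma EB_add {X Y} : EB X -> EB Y -> EB (X + Y).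
Proof.
case=> h1 h2 [h3 h4]; rewrite /EB !mxE !conjD h1 h3; split; first by ring.
have -> : X i0 i0 + Y i0 i0 + (conj (X i0 i0) + conj (Y i0 i0)) =
  (X i0 i0 + conj (X i0 i0)) + (Y i0 i0 + conj (Y i0 i0)) by ring.
rewrite h2 h4; ring.
Qed.

Lemma scal_entries (c : F) : (c%:M : M2) i0 i0 = c /\ (c%:M : M2) i0 i1 = 0 /\
  (c%:M : M2) i1 i0 = 0 /\ (c%:M : M2) i1 i1 = c.
Proof. by rewrite !mxE /= !mulr1n !mulr0n. Qed.

Lemma EA_scal c : EA c%:M.
Proof. have [e00 [e01 [e10 e11]]] := scal_entries c; by rewrite /EA e00 e01 e10 e11 conj0. Qed.
Lemma EB_scal c : EB c%:M.
Proof. have [e00 [e01 [e10 e11]]] := scal_entries c; by rewrite /EB e00 e01 e10 e11 conj0 oppr0. Qed.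

Lemma decomp Y : exists A B, [/\ EA A, EB B & Y = A + B].
Proof.
set h := (2 : F)^-1.
have hh : conj h = h by rewrite /h conjV -[2%R]/(1 *+ 2) conjMn conj1.
have h2 : h + h = 1 by rewrite -mulr2n -mulr_natr mulVf ?two_neq0.
set a := Y i0 i0; set b := Y i0 i1; set c := Y i1 i0; set d := Y i1 i1.
exists (\matrix_(i, j) (if i == i0 then (if j == i0 then h * (a + conj a) else h * (b + conj c))
   else (if j == i0 then h * (c + conj b) else h * (d + conj d)))).
exists (\matrix_(i, j) (if i == i0 then (if j == i0 then h * (a - conj a) else h * (b - conj c))
   else (if j == i0 then h * (c - conj b) else h * (d - conj d)))).
split.
- rewrite /EA !mxE /= !conjM !conjD !conjK hh; split; ring.
- rewrite /EB !mxE /= !conjM !conjB !conjK hh; split; ring.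
- apply/m_eqE; rewrite !mxE /=; split.
  + by rewrite -mulrDr addrACA subrr addr0 -mulr2n -mulr_natl mulrA (mulrC h) mulr_natl mulr2n h2 mul1r.
  + by rewrite -mulrDr addrACA subrr addr0 -mulr2n -mulr_natl mulrA (mulrC h) mulr_natl mulr2n h2 mul1r.
  + by rewrite -mulrDr addrACA subrr addr0 -mulr2n -mulr_natl mulrA (mulrC h) mulr_natl mulr2n h2 mul1r.
  + by rewrite -mulrDr addrACA subrr addr0 -mulr2n -mulr_natl mulrA (mulrC h) mulr_natl mulr2n h2 mul1r.
Qed.
Definition mkM (a b c d : F) : M2 := \matrix_(i, j) (if i == i0 then (if j == i0 then a else b)
   else (if j == i0 then c else d)).

Lemma central Z : (forall X, rel X Z) -> exists c, Z = c%:M.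
Proof.
move=> h.
have r1 := h (mkM 1 0 0 0); have r2 := h (mkM 0 1 0 0); have r3 := h (mkM 0 iota 0 0).
move/m_eqE: r1 => [_ e1 _ _]; move/m_eqE: r2 => [e2 e3 _ _]; move/m_eqE: r3 => [e4 _ _ _].
rewrite ?(mxE, sum2) /= ?conj0 ?conj1 in e1 e2 e3 e4.
rewrite ?(mul1r, mul0r, mulr0, mulr1, addr0, add0r) in e1 e2 e3 e4.
have b0 : Z i0 i1 = 0.
  apply: sep; first by rewrite addrC.
  by rewrite [conj iota * _]mulrC.
have c0 : Z i1 i0 = 0 by apply: conj_inj; rewrite e1 b0 conj0.
have da : Z i1 i1 = Z i0 i0 by apply: conj_inj.
exists (Z i0 i0); have [s00 [s01 [s10 s11]]] := scal_entries (Z i0 i0).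
by apply: m_eq; rewrite ?s00 ?s01 ?s10 ?s11.
Qed.
Lemma rel_add X1 X2 Z : rel X1 Z -> rel X2 Z -> rel (X1 + X2) Z.
Proof.
rewrite /rel => h1 h2; rewrite ctD !mulmxDl !mulmxDr.
by rewrite addrACA h1 h2 addrACA.
Qed.

Theorem gen_main (T : M2 -> M2) : bijective T -> real_linear emb T ->
  (forall A B : M2, specnorm abs (A *m B) = specnorm abs A * specnorm abs B ->
     specnorm abs (T A *m T B) = specnorm abs (T A) * specnorm abs (T B)) ->
  forall c, exists c', T c%:M = c'%:M.
Proof.
move=> [g Tg gT] [TD TZ] hP c.
have Tnml X : nml X -> nml (T X).
  move=> hX; apply: P_normal; rewrite /nrm expr2; apply: hP; rewrite -expr2.
  exact: normal_P.
set Z := T c%:M.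
have hZ : nml Z := Tnml _ (EA_nml (EA_scal c)).
have relA X : EA X -> rel (T X) Z.
  move=> hX; apply: rel_of; [exact: Tnml _ (EA_nml hX) | exact: hZ |].
  rewrite /Z -TD; apply: Tnml; apply: EA_nml; exact: EA_add hX (EA_scal c).
have relB X : EB X -> rel (T X) Z.
  move=> hX; apply: rel_of; [exact: Tnml _ (EB_nml hX) | exact: hZ |].
  rewrite /Z -TD; apply: Tnml; apply: EB_nml; exact: EB_add hX (EB_scal c).
apply: central => W.
have [A [B [hA hB hY]]] := decomp (g W).
have -> : W = T A + T B by rewrite -TD -hY gT.
exact: rel_add (relA _ hA) (relB _ hB).
Qed.
End Gen.

Lemma real_inst (R : realType) : thm11_for (fun x : R => `|x|) (fun r : R => r).
Proof.
move=> T hb hl hP.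
have ad : forall x : R, (fun r : R => r) (`|x| ^+ 2) = x * (fun x => x) x.
  by move=> x /=; rewrite real_normK ?num_real // expr2.
have sp : forall b : R, b + b = 0 -> 1 * b + 1 * b = 0 -> b = 0.
  by move=> b h _; lra.
have key := @gen_main R R (fun x => `|x|) (fun r => r) (fun x => x) (fun x => x)
  (fun _ _ => erefl) (fun _ _ => erefl) erefl (fun _ _ h => h)
  (fun _ _ => erefl) (fun _ _ => erefl) (fun _ => erefl) (fun _ => erefl)
  (fun x => normr_ge0 x) ad
  (fun z => mulr2n z) (fun z => ler_norm z) 1 sp T hb hl hP.
case: hb => g Tg gT; case: hl => TD TZ0.
have TZ : forall (r : R) A, T (r *: A) = r *: T A := TZ0.
have T0 : T 0 = 0 by apply: (@addrI _ (T 0)); rewrite -TD !addr0.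
apply/seteqP; split.
  move=> _ [X [a _ <-] <-]; have [c' e] := key a; by exists c'.
move=> _ [b _ <-].
have [c1 e1] := key 1.
have c10 : c1 != 0.
  have z : (0 : R)%:M = 0 :> 'M[R]_2 by apply/matrixP => i j; rewrite !mxE mul0rn.
  apply/eqP => c0; move: e1; rewrite c0 z -T0 => /(can_inj Tg) /eqP.
  by rewrite (negbTE (matrix_nonzero1 _ 1)).
exists ((b / c1)%:M); first by exists (b / c1).
rewrite -scalemx1 TZ e1 -scalemx1 scalerA -mulrA mulVf // mulr1.
by rewrite scalemx1.
Qed.

Section Cplx.
Local Open Scope complex_scope.
Variable R : realType.
Lemma cE (a b c d : R) : a = c -> b = d -> (a +i* b) = (c +i* d) :> R[i].
Proof. by move=> -> ->. Qed.
Lemma cI (a b c d : R) : (a +i* b) = (c +i* d) :> R[i] -> a = c /\ b = d.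
Proof. by case. Qed.
Let emb := real_complex R.
Lemma c_embD (a b : R) : emb (a + b) = emb a + emb b.
Proof. rewrite /emb /=; simpc; apply: cE => //=; ring. Qed.
Lemma c_embM (a b : R) : emb (a * b) = emb a * emb b.
Proof. rewrite /emb /=; simpc; apply: cE => //=; ring. Qed.
Lemma c_emb1 : emb 1 = 1. Proof. by []. Qed.
Lemma c_emb_inj : injective emb. Proof. by move=> a b [->]. Qed.
Lemma c_conjD (x y : R[i]) : conjc (x + y) = conjc x + conjc y.
Proof. case: x => a b; case: y => c d /=; simpc; apply: cE => //=; ring. Qed.
Lemma c_conjM (x y : R[i]) : conjc (x * y) = conjc x * conjc y.
Proof. case: x => a b; case: y => c d /=; simpc; apply: cE => //=; ring. Qed.
Lemma c_conjK : involutive (@conjc R). Proof. by case=> a b /=; rewrite opprK. Qed.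
Lemma c_conj_emb (r : R) : conjc (emb r) = emb r. Proof. by rewrite /emb /= oppr0. Qed.
Lemma c_abs_ge0 (x : R[i]) : 0 <= Normc.normc x. Proof. by case: x => a b /=; rewrite sqrtr_ge0. Qed.
Lemma c_abs_def (x : R[i]) : emb (Normc.normc x ^+ 2) = x * conjc x.
Proof.
case: x => a b /=; simpc; rewrite /emb /= sqr_sqrtr ?addr_ge0 ?sqr_ge0 //.
apply: cE; ring.
Qed.
Lemma c_re_def (z : R[i]) : emb (complex.Re z *+ 2) = z + conjc z.
Proof. case: z => a b /=; simpc; rewrite /emb /=; apply: cE => //; ring. Qed.
Lemma c_re_le (z : R[i]) : complex.Re z <= Normc.normc z.
Proof.
case: z => a b /=; case: (lerP a 0) => ha; first by apply: le_trans ha (sqrtr_ge0 _).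
have hs : 0 <= a ^+ 2 + b ^+ 2 by rewrite addr_ge0 ?sqr_ge0.
have := sqr_sqrtr hs; have := sqrtr_ge0 (a ^+ 2 + b ^+ 2); have := sqr_ge0 b; nra.
Qed.
Lemma c_sep (b : R[i]) : b + conjc b = 0 -> 'i * conjc b + conjc 'i * b = 0 -> b = 0.
Proof.
case: b => x y /=; simpc => /cI [h1 _] /cI [h2 _].
by apply: cE; lra.
Qed.
End Cplx.

Lemma scal_lin (R : realType) (x y : R) (u v : R[i]) :
  ((real_complex R x) * u + (real_complex R y) * v)%:M =
  (real_complex R x) *: (u%:M : 'M[R[i]]_2) + (real_complex R y) *: v%:M.
Proof. by apply/matrixP => i j; rewrite !mxE mulrnDl -!mulrnAr. Qed.

Lemma cplx_inst (R : realType) : thm11_for (@Normc.normc R) (real_complex R).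
Proof.
move=> T hb hl hP.
have key := @gen_main R R[i] (@Normc.normc R) (real_complex R) (@conjc R) (@complex.Re R)
  (@c_embD R) (@c_embM R) (@c_emb1 R) (@c_emb_inj R) (@c_conjD R) (@c_conjM R)
  (@c_conjK R) (@c_conj_emb R) (@c_abs_ge0 R) (@c_abs_def R) (@c_re_def R) (@c_re_le R)
  'i%C (@c_sep R) T hb hl hP.
case: hb => g Tg gT; case: hl => TD TZ.
have T0 : T 0 = 0 by apply: (@addrI _ (T 0)); rewrite -TD !addr0.
apply/seteqP; split.
  move=> _ [X [a _ <-] <-]; have [c' e] := key a; by exists c'.
move=> _ [c _ <-].
have [a ea] := key 1.
have [b eb] := key 'i%C.
have TS x y : T ((real_complex R x * 1 + real_complex R y * 'i%C)%:M) =
    (real_complex R x * a + real_complex R y * b)%:M.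
  by rewrite !scal_lin TD !TZ ea eb.
have z0 : (0 : R[i])%:M = 0 :> 'M[R[i]]_2 by apply/matrixP => i j; rewrite !mxE mul0rn.
have hinj x y : real_complex R x * a + real_complex R y * b = 0 -> x = 0 /\ y = 0.
  move=> h; have := TS x y; rewrite h z0 -T0 => /(can_inj Tg) /matrixP /(_ ord0 ord0).
  rewrite !mxE /= ?mulr1n; simpc => h0; split.
    by have := congr1 (@complex.Re R) h0.
  by have := congr1 (@complex.Im R) h0.
move: ea eb TS hinj; case: a => a1 a2; case: b => b1 b2 => ea eb TS hinj.
set D := a1 * b2 - a2 * b1.
have D0 : D != 0.
  apply/eqP => D0.
  have [h1 h2] : b2 = 0 /\ - a2 = 0.
    rewrite /D in D0; apply: hinj; simpc; apply: cE; lra.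
  have h2' : a2 = 0 by lra.
  have [h3 h4] : b1 = 0 /\ - a1 = 0.
    apply: hinj; simpc; apply: cE; rewrite ?h1 ?h2'; lra.
  have h4' : a1 = 0 by lra.
  move: ea; rewrite h4' h2' z0 -T0 => /(can_inj Tg) /eqP.
  by rewrite (negbTE (matrix_nonzero1 _ 1)).
case: c => c1 c2.
exists ((real_complex R ((c1 * b2 - c2 * b1) / D) * 1 + real_complex R ((a1 * c2 - a2 * c1) / D) * 'i%C)%:M).
  by exists (real_complex R ((c1 * b2 - c2 * b1) / D) * 1 + real_complex R ((a1 * c2 - a2 * c1) / D) * 'i%C).
rewrite TS; congr (_%:M); simpc; apply: cE; rewrite /D; field; exact: D0.
Qed.

Theorem mainTheorem11 (R : realType) :
  thm11_for (fun x : R => `|x|) (fun r : R => r) /\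
  thm11_for (@Normc.normc R) (real_complex R).
Proof. split; [exact: real_inst | exact: cplx_inst]. Qed.
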